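(* Let $d\ge1$ and $c=(c_1,\dots,c_M)\in C(d,n,p)$. (1) If $x^{\underline b}=x_1^{b_1}\cdots x_n^{b_n}$ is a monomial of degree $d$ with carry pattern $c$, then for each $1\le i\le n$, $$c(x_ix^{\underline b})=(c_1,\dots,c_M,0)+(\underbrace{1,\dots,1}_{\lfloor d\rfloor'},0,\dots,0)-(\underbrace{1,\dots,1}_{\lfloor b_i\rfloor'},0,\dots,0)$$ (vectors of length $M+1$). (2) The sequence $c^1:=(c_1,\dots,c_M,0)+(1^{\lfloor d\rfloor'},0,\dots,0)-(1^{c^\sharp},0,\dots,0)$ is the maximum, in $C(d+1,n,p)$, of the set of carry patterns of the monomials $x_ix^{\underline b}$ with $1\le i\le n$ and $x^{\underline b}$ of degree $d$ with carry pattern $c$. (3) If $c'\in C(d,n,p)$ with $c'<c$, then $c'^1\le c^1$ in $C(d+1,n,p)$.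
   Context: Base-$p$ expansion $a=\sum_{j\ge0}a_jp^j$ with $0\le a_j\le p-1$ ($p$ prime); for $d\ge1$, $M=\max\{j:d_j\ne0\}$; $\lfloor a\rfloor':=\min\{j:a_j\ne p-1\}$ (so $\lfloor 0\rfloor'=0$); $(1^k,0,\dots,0)$ denotes the vector whose first $k$ entries are $1$ and the rest $0$. For a monomial $x^{\underline b}=x_1^{b_1}\cdots x_n^{b_n}$ of degree $d$ with $b_{i,j}$ the base-$p$ digits of $b_i$, its carry pattern $c(\underline b)=(c_1,\dots,c_M)$ is determined by $\sum_{i=1}^n\sum_{0\le j<\ell}b_{i,j}p^j=c_\ell p^\ell+\sum_{0\le j<\ell}d_jp^j$ for $1\le\ell\le M$, with $c_i=0$ for $i<1$ and $i>M$. $C(d,n,p)$ is the set of carry patterns of degree-$d$ monomials in $n$ variables, partially ordered componentwise (sequences of different lengths compared after padding with zeros). For $c\in C(d,n,p)$, $c^\sharp:=\min\{0\le j\le M: d_j+pc_{j+1}-c_j<n(p-1)\}$ (with $c_0=c_{M+1}=0$). *)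

(* Defs.v *)
From mathcomp Require Import all_boot all_order all_algebra.
Set Implicit Arguments. Unset Strict Implicit. Unset Printing Implicit Defensive.
Import Order.TTheory GRing.Theory Num.Theory.

Definition digit (p a j : nat) : nat := (a %/ p ^ j) %% p.

(* M = max {j : d_j <> 0}  (meaningful for d >= 1, p >= 2; any such j is <= d) *)
Definition topM (p d : nat) : nat :=
  \max_(j < d.+1 | digit p d j != 0) (j : nat).

(* floor'(a) = min {j : a_j <> p-1}; for p >= 2 such a j is <= a+1, and
   the digit a+1 of a is 0 <> p-1, so the search returns a+1 if no j <= a works *)
Definition floorp (p a : nat) : nat :=
  find (fun j => digit p a j != p.-1) (iota 0 a.+1).

(* monomials x^b in n variables: exponent vectors b : 'I_n -> nat *)
Definition deg (n : nat) (b : 'I_n -> nat) : nat := \sum_(i < n) b i.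

Definition incr (n : nat) (b : 'I_n -> nat) (i : 'I_n) : 'I_n -> nat :=
  fun k => b k + (k == i).

(* the carry c_l determined by
   sum_i sum_{j<l} b_{i,j} p^j = c_l p^l + sum_{j<l} d_j p^j *)
Definition carry (p n : nat) (b : 'I_n -> nat) (l : nat) : nat :=
  ((\sum_(i < n) \sum_(j < l) digit p (b i) j * p ^ j)
     - \sum_(j < l) digit p (deg b) j * p ^ j) %/ p ^ l.

(* carry pattern c(b) = (c_1,...,c_M), as a function nat -> nat that is zero
   outside [1, M] (this is the "padding with zeros" convention) *)
Definition cpat (p n : nat) (b : 'I_n -> nat) : nat -> nat :=
  fun l => if (0 < l) && (l <= topM p (deg b)) then carry p b l else 0.

Definition inC (p n d : nat) (c : nat -> nat) : Prop :=
  exists b : 'I_n -> nat, deg b = d /\ cpat p b =1 c.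

Definition leC (c c' : nat -> nat) : Prop := forall l, c l <= c' l.
Definition ltC (c c' : nat -> nat) : Prop := leC c c' /\ exists l, c l <> c' l.

(* the vector (1^k, 0, ..., 0), indexed from position 1 *)
Definition ones (k l : nat) : int := if (0 < l) && (l <= k) then 1%R else 0%R.

(* c with the conventions c_0 = c_{M+1} = 0 (c_j = 0 outside [1,M]) *)
Definition cext (p d : nat) (c : nat -> nat) (j : nat) : nat :=
  if (0 < j) && (j <= topM p d) then c j else 0.

Definition csharp (p n d : nat) (c : nat -> nat) : nat :=
  find (fun j => ((digit p d j + p * cext p d c j.+1)%:Z - (cext p d c j)%:Z
                   < (n * p.-1)%:Z)%R)
       (iota 0 (topM p d).+1).

Definition cone (p n d : nat) (c : nat -> nat) (l : nat) : int :=
  ((cext p d c l)%:Z + ones (floorp p d) l - ones (csharp p n d c) l)%R.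

(* Main.v *)
Require Import Defs.
From mathcomp Require Import all_boot all_order all_algebra.
From mathcomp Require Import zify.
Import Order.TTheory GRing.Theory Num.Theory.
Set Implicit Arguments. Unset Strict Implicit. Unset Printing Implicit Defensive.

Lemma Lstep p a l : 0 < p -> a %% p ^ l.+1 = a %% p ^ l + digit p a l * p ^ l.
Proof.
move=> p0; rewrite /digit.
have pl0 : 0 < p ^ l by rewrite expn_gt0 p0.
rewrite {1}(divn_eq a (p ^ l)) {1}(divn_eq (a %/ p ^ l) p).
rewrite mulnDl -mulnA (mulnC p) -expnSr -addnA modnMDl modn_small.
  by rewrite addnC.
have h1 := ltn_pmod a pl0. have h2 := ltn_pmod (a %/ p ^ l) p0.
rewrite expnSr; nia.
Qed.

Lemma L0 p a l : 0 < p -> \sum_(j < l) digit p a j * p ^ j = a %% p ^ l.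
Proof.
move=> p0; elim: l => [|l IH]; first by rewrite big_ord0 expn0 modn1.
by rewrite big_ord_recr /= IH Lstep.
Qed.

Definition allD p a l := all (fun j => digit p a j == p.-1) (iota 0 l).

Lemma LR p a l : 1 < p -> (a %% p ^ l == (p ^ l).-1) = allD p a l.
Proof.
move=> p1; rewrite /allD; elim: l => [|l IH]; first by rewrite expn0 modn1.
rewrite -addn1 iotaD all_cat /= andbT add0n -IH addn1 Lstep; last by lia.
have pl0 : 0 < p ^ l by rewrite expn_gt0; lia.
have h1 := ltn_pmod a pl0. have h2 : digit p a l < p by rewrite /digit ltn_pmod //; lia.
rewrite expnSr.
move: (a %% p ^ l) (digit p a l) (p ^ l) h1 h2 pl0 => x y P h1 h2 P0.
apply/eqP/andP => [H|[/eqP-> /eqP->]]; last by nia.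
split; apply/eqP; nia.
Qed.

Lemma digit_big p a j : 1 < p -> a < p ^ j -> digit p a j = 0.
Proof. by move=> p1 h; rewrite /digit divn_small // mod0n. Qed.

Lemma Lfind p a l : 1 < p -> (l <= floorp p a) = allD p a l.
Proof.
move=> p1; rewrite /floorp /allD.
set P := (fun j => digit p a j != p.-1).
case: (leqP l a.+1) => hl.
  rewrite -(subnKC hl) iotaD find_cat add0n.
  case: ifP => hh.
    have := hh; rewrite has_find size_iota => h.
    rewrite leqNgt h /=; apply/esym/negbTE; rewrite -has_predC.
    by apply: sub_has hh => j; rewrite /P /=.
  have : ~~ has P (iota 0 l) by rewrite hh.
  rewrite -all_predC => hall; rewrite size_iota leq_addr.
  by apply/esym; apply: sub_all hall => j; rewrite /P /= negbK.
have -> : (l <= find P (iota 0 a.+1)) = false.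
  apply/negbTE; rewrite -ltnNge; apply: leq_ltn_trans hl.
  by rewrite -{2}(size_iota 0 a.+1) find_size.
apply/esym/negbTE/allPn; exists a.
  by rewrite mem_iota /=; lia.
rewrite digit_big //; last exact: ltn_expl. lia.
Qed.

Lemma Lfl p a l : 1 < p -> (a %% p ^ l == (p ^ l).-1) = (l <= floorp p a).
Proof. by move=> p1; rewrite LR // Lfind. Qed.

Definition S p n (b : 'I_n -> nat) l := \sum_(i < n) b i %% p ^ l.

Lemma Smod p n (b : 'I_n -> nat) l : S p b l %% p ^ l = deg b %% p ^ l.
Proof. exact: modn_summ. Qed.

Lemma L1 p n (b : 'I_n -> nat) l : 0 < p -> carry p b l = S p b l %/ p ^ l.
Proof.
move=> p0; rewrite /carry.
rewrite (eq_bigr (fun i => b i %% p ^ l)); last by move=> i _; rewrite L0.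
rewrite L0 // -/(S p b l) -Smod.
have pl0 : 0 < p ^ l by rewrite expn_gt0 p0.
by rewrite {1}(divn_eq (S p b l) (p ^ l)) addnK mulnK.
Qed.

Lemma topM_bound p d : 1 < p -> d < p ^ (topM p d).+1.
Proof.
move=> p1; rewrite ltnNge; apply/negP => H.
have d0 : 0 < d by apply: leq_trans H; rewrite expn_gt0; lia.
set k := trunc_log p d.
have hk1 := trunc_logP p1 d0. have hk2 := trunc_log_ltn d p1.
have kM : (topM p d).+1 <= k by apply: trunc_log_max.
have kd : k < d.+1 by apply: leq_trans (ltn_expl k p1) _; apply: leq_trans hk1 _.
have dig : digit p d k != 0.
  rewrite /digit modn_small.
    by rewrite -lt0n divn_gt0 // expn_gt0; lia.
  rewrite ltn_divLR; last by rewrite expn_gt0; lia.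
  by rewrite -expnS.
have : k <= topM p d.
  rewrite /topM. exact: (@leq_bigmax_cond _ (fun j : 'I_d.+1 => digit p d j != 0) (fun j : 'I_d.+1 => (j : nat)) (Ordinal kd)).
lia.
Qed.

Lemma leq_bi n (b : 'I_n -> nat) i : b i <= deg b.
Proof. by rewrite /deg (bigD1 i) //= leq_addr. Qed.

Lemma carry_out p n (b : 'I_n -> nat) l : 1 < p ->
  (l == 0) || (topM p (deg b) < l) -> carry p b l = 0.
Proof.
move=> p1 /orP [/eqP->|hl].
  by rewrite L1 ?expn0 ?divn1 /S; [apply: big1 => i _; rewrite expn0 modn1|lia].
have hd : deg b < p ^ l.
  apply: leq_trans (topM_bound _ p1) _; rewrite leq_exp2l //.
rewrite L1; last by lia.
rewrite /S (eq_bigr b); first by rewrite divn_small.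
move=> i _; rewrite modn_small //; apply: leq_ltn_trans (leq_bi b i) hd.
Qed.

Lemma cpat_carry p n (b : 'I_n -> nat) : 1 < p -> cpat p b =1 carry p b.
Proof.
move=> p1 l; rewrite /cpat; case: ifP => // h.
by rewrite carry_out //; move: h; case: l => //= l; rewrite ltnNge => /negbFE.
Qed.

Lemma cext_carry p n d c (b : 'I_n -> nat) : 1 < p -> deg b = d ->
  cpat p b =1 c -> cext p d c =1 carry p b.
Proof.
move=> p1 hd hc l; rewrite /cext -hc cpat_carry //; case: ifP => // h.
by rewrite carry_out //; move: h; rewrite hd; case: l => //= l; rewrite ltnNge => /negbFE.
Qed.

Lemma mod_succ a m : 0 < m -> (a + 1) %% m + m * (a %% m == m.-1) = a %% m + 1.
Proof.
move=> m0; rewrite -modnDml.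
have := ltn_pmod a m0; move: (a %% m) => x hx.
case: eqP => [->|h].
  by rewrite addn1 prednK // modnn muln1.
by rewrite muln0 addn0 modn_small //; lia.
Qed.

Lemma S_incr p n (b : 'I_n -> nat) i l : 0 < p ->
  S p (incr b i) l + p ^ l * (b i %% p ^ l == (p ^ l).-1) = S p b l + 1.
Proof.
move=> p0; have m0 : 0 < p ^ l by rewrite expn_gt0 p0.
rewrite /S (bigD1 i) //= [in RHS](bigD1 i) //= /incr eqxx.
rewrite (eq_bigr (fun k => b k %% p ^ l)); last first.
  by move=> k /negbTE ->; rewrite addn0.
rewrite addnAC mod_succ //; lia.
Qed.

Lemma carry_incr p n (b : 'I_n -> nat) i l : 1 < p ->
  Posz (carry p (incr b i) l) =
  (Posz (carry p b l) + Posz (l <= floorp p (deg b)) - Posz (l <= floorp p (b i)))%R.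
Proof.
move=> p1; have p0 : 0 < p by lia.
have m0 : 0 < p ^ l by rewrite expn_gt0 p0.
rewrite !L1 // -!Lfl // -Smod.
set m := p ^ l.
have E := S_incr b i l p0; rewrite -/m in E.
have F := mod_succ (S p b l %% m) m0; rewrite modn_mod in F.
set e := (b i %% m == m.-1) in E *.
set f := (S p b l %% m == m.-1) in F *.
rewrite -/m in F.
have Sd := divn_eq (S p b l) m.
have K : (S p (incr b i) l + e * m = (S p b l %/ m + f) * m + (S p b l %% m + 1) %% m)%N.
  move: E F Sd; move: (S p (incr b i) l) => A; move: (S p b l %/ m) => B.
  move: (S p b l %% m) => C; move: (S p b l) => D.
  move: (nat_of_bool e) => x; move: (nat_of_bool f) => y.
  rewrite mulnDl (mulnC x) (mulnC y).
  move: (m * x) => u; move: (m * y) => v; move: (B * m) => w; move: ((C + 1) %% m) => R.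
  lia.
have H : (S p (incr b i) l %/ m + e = S p b l %/ m + f)%N.
  have := congr1 (fun z => z %/ m) K => /=.
  by rewrite !divnMDl // divnDMl // (@divn_small (_ %% m)) ?ltn_pmod // addn0.
by rewrite -PoszD -H PoszD addrK.
Qed.

Definition sig p n (b : 'I_n -> nat) j := \sum_(i < n) digit p (b i) j.

Lemma sigma_eq p n (b : 'I_n -> nat) l : 1 < p ->
  sig p b l + carry p b l = p * carry p b l.+1 + digit p (deg b) l.
Proof.
move=> p1; have p0 : 0 < p by lia.
have m0 : 0 < p ^ l by rewrite expn_gt0 p0.
rewrite !L1 //.
have E1 : S p b l.+1 = S p b l + sig p b l * p ^ l.
  by rewrite /S /sig big_distrl -big_split /=; apply: eq_bigr => i _; rewrite Lstep.
have D1 := divn_eq (S p b l.+1) (p ^ l.+1).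
have D0 := divn_eq (S p b l) (p ^ l).
rewrite Smod Lstep // in D1. rewrite Smod in D0.
apply/eqP; rewrite -(eqn_pmul2r m0); apply/eqP.
move: D1 D0 E1; rewrite expnSr.
move: (S p b l.+1 %/ (p ^ l * p)) => c1; move: (S p b l %/ p ^ l) => c0.
move: (S p b l.+1) => A; move: (S p b l) => B; move: (sig p b l) => s.
move: (digit p (deg b) l) => dl; move: (deg b %% p ^ l) => r; move: (p ^ l) => P.
move=> h1 h2 h3.
rewrite !mulnDl (mulnC p c1) -mulnA (mulnC p P).
move: (s * P) (c0 * P) (c1 * (P * p)) (dl * P) h1 h2 h3 => u v w z; lia.
Qed.

Lemma sum_max n (f : 'I_n -> nat) K : (forall i, f i <= K) ->
  n * K <= \sum_(i < n) f i -> forall i, f i = K.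
Proof.
move=> hf hs i; apply/eqP; rewrite eqn_leq hf /=.
have hK : \sum_(k < n) K = n * K by rewrite sum_nat_const card_ord.
rewrite -hK (bigD1 i) //= [X in _ <= X](bigD1 i) //= in hs.
have : \sum_(k < n | k != i) f k <= \sum_(k < n | k != i) K by apply: leq_sum.
move=> h; move: hs h; move: (\sum_(k < n | k != i) f k) (\sum_(k < n | k != i) K) => x y; lia.
Qed.

Lemma csharpE p n d c (b : 'I_n -> nat) : 1 < p -> deg b = d -> cpat p b =1 c ->
  csharp p n d c = find (fun j => sig p b j < n * p.-1) (iota 0 (topM p d).+1).
Proof.
move=> p1 hd hc; rewrite /csharp; apply: eq_find => j.
rewrite !(cext_carry p1 hd hc) -hd addnC -sigma_eq //.
by rewrite PoszD addrK ltz_nat.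
Qed.

Lemma Lall p n (b : 'I_n -> nat) k : 1 < p ->
  (forall j, j < k -> ~~ (sig p b j < n * p.-1)) -> forall i, k <= floorp p (b i).
Proof.
move=> p1 hj i; rewrite Lfind // /allD; apply/allP => j; rewrite mem_iota /= => hjk.
have := hj j hjk; rewrite -leqNgt => hs.
have hd : forall i, digit p (b i) j <= p.-1.
  by move=> i'; rewrite /digit -ltnS prednK ?ltn_pmod //; lia.
by rewrite (sum_max hd hs).
Qed.

Lemma Lge p n d c (b : 'I_n -> nat) : 1 < p -> deg b = d -> cpat p b =1 c ->
  forall i, csharp p n d c <= floorp p (b i).
Proof.
move=> p1 hd hc; rewrite (csharpE p1 hd hc); apply: Lall => // j hj.
have hs : j < size (iota 0 (topM p d).+1) by apply: leq_trans hj (find_size _ _).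
have := before_find 0 hj; rewrite nth_iota ?add0n //; last by rewrite size_iota in hs.
by move=> ->.
Qed.

Lemma Lexist p n d c (b : 'I_n -> nat) : 1 < p -> 0 < n -> deg b = d -> cpat p b =1 c ->
  exists i, floorp p (b i) <= csharp p n d c.
Proof.
move=> p1 n0 hd hc; rewrite (csharpE p1 hd hc).
set P := (fun j => sig p b j < n * p.-1).
set s := iota 0 (topM p d).+1.
case: (boolP (has P s)) => hh.
  have := nth_find 0 hh; rewrite has_find in hh.
  rewrite nth_iota; last by rewrite size_iota in hh.
  rewrite add0n; set j := find P s => hP.
  have : exists i, digit p (b i) j != p.-1.
    case: (boolP [exists i, digit p (b i) j != p.-1]) => [/existsP //|]; rewrite negb_exists => /forallP H.
    move: hP; rewrite /P /sig (eq_bigr (fun _ => p.-1)).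
      by rewrite sum_nat_const card_ord ltnn.
    by move=> i _; move: (H i); rewrite negbK => /eqP.
  case=> i hi; exists i; rewrite leqNgt Lfind // /allD.
  apply/negP => /allP /(_ j); rewrite mem_iota /= add0n ltnS leqnn => /(_ isT).
  by rewrite (negbTE hi).
exists (Ordinal n0).
have -> : find P s = size s by apply/eqP; rewrite eqn_leq find_size leqNgt -has_find hh.
rewrite size_iota leqNgt Lfind // /allD.
apply/negP => /allP /(_ (topM p d).+1); rewrite mem_iota /= add0n ltnS leqnn => /(_ isT).
rewrite digit_big //; first lia.
by apply: leq_ltn_trans (leq_bi b _) _; rewrite hd topM_bound.
Qed.

Lemma ones_diff x y l :
  (Posz (l <= x) - Posz (l <= y) = ones x l - ones y l)%R.
Proof. by case: l => [|l]; rewrite /ones //= ?subrr; case: (l < x); case: (l < y). Qed.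

Lemma ones01 k l : (0 <= ones k l <= 1)%R.
Proof. by rewrite /ones; case: ifP. Qed.

Lemma ones_le x y l : x <= y -> (ones x l <= ones y l)%R.
Proof.
rewrite /ones => hxy; case: ifP => [/andP [h1 h2]|_]; last by case: ifP.
by rewrite h1 (leq_trans h2 hxy).
Qed.

Lemma part1 p n d c (b : 'I_n -> nat) i l : 1 < p -> deg b = d -> cpat p b =1 c ->
  Posz (cpat p (incr b i) l)
  = (Posz (cext p d c l) + ones (floorp p d) l - ones (floorp p (b i)) l)%R.
Proof.
move=> p1 hd hc; rewrite cpat_carry // carry_incr // (cext_carry p1 hd hc) hd.
by rewrite -addrA ones_diff addrA.
Qed.

Lemma part3key p n d c c' (b b' : 'I_n -> nat) l : 1 < p -> 0 < n ->
  deg b = d -> cpat p b =1 c -> deg b' = d -> cpat p b' =1 c' ->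
  carry p b' l = carry p b l -> l <= csharp p n d c -> l <= csharp p n d c'.
Proof.
move=> p1 n0 hd hc hd' hc' heq hl.
have p0 : 0 < p by lia.
have m0 : 0 < p ^ l by rewrite expn_gt0 p0.
have hall : forall i, b i %% p ^ l = (p ^ l).-1.
  by move=> i; apply/eqP; rewrite Lfl //; apply: leq_trans hl (Lge p1 hd hc i).
have hS : S p b' l = S p b l.
  rewrite (divn_eq (S p b' l) (p ^ l)) (divn_eq (S p b l) (p ^ l)) !Smod hd hd'.
  by rewrite -!L1 // heq.
have hS0 : S p b l = n * (p ^ l).-1.
  by rewrite /S (eq_bigr _ (fun i _ => hall i)) sum_nat_const card_ord.
have hb' : forall i, b' i %% p ^ l = (p ^ l).-1.
  apply: sum_max; first by move=> i; rewrite -ltnS prednK // ltn_pmod.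
  by rewrite -/(S p b' l) hS hS0.
have [i hi] := Lexist p1 n0 hd' hc'.
apply: leq_trans hi; rewrite -Lfl //; exact/eqP.
Qed.

Unset Implicit Arguments.

Theorem mainTheorem7 (p n d : nat) (c : nat -> nat) :
  prime p -> 1 <= d -> inC p n d c ->
  (* (1) *)
  (forall b : 'I_n -> nat, deg b = d -> cpat p b =1 c ->
     forall (i : 'I_n) (l : nat),
       Posz (cpat p (incr b i) l)
       = (Posz (cext p d c l) + ones (floorp p d) l - ones (floorp p (b i)) l)%R)
  /\
  (* (2) c^1 is the maximum of the set of carry patterns of the x_i x^b *)
  ((exists (b : 'I_n -> nat) (i : 'I_n),
      deg b = d /\ cpat p b =1 c /\
      forall l, Posz (cpat p (incr b i) l) = cone p n d c l)
   /\ (forall (b : 'I_n -> nat) (i : 'I_n), deg b = d -> cpat p b =1 c ->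
        forall l, (Posz (cpat p (incr b i) l) <= cone p n d c l)%R))
  /\
  (* (3) *)
  (forall c' : nat -> nat, inC p n d c' -> ltC c' c ->
     forall l, (cone p n d c' l <= cone p n d c l)%R).
Proof.
move=> pp d1 [b0 [hd0 hc0]].
have p1 := prime_gt1 pp.
have n0 : 0 < n.
  case: n b0 hd0 {hc0} => // b0; rewrite /deg big_ord0 => h; lia.
split; first by move=> b hd hc i l; exact: part1.
split; first split.
- have [i hi] := Lexist p1 n0 hd0 hc0.
  have he : floorp p (b0 i) = csharp p n d c.
    by apply/eqP; rewrite eqn_leq hi (Lge p1 hd0 hc0).
  exists b0, i; split=> //; split=> // l.
  by rewrite (part1 _ _ p1 hd0 hc0) he.
- move=> b i hd hc l; rewrite (part1 _ _ p1 hd hc) /cone.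
  by rewrite lerD2l lerN2 ones_le // (Lge p1 hd hc).
move=> c' [b' [hd' hc']] [hle _] l.
rewrite /cone !(cext_carry p1 hd0 hc0) !(cext_carry p1 hd' hc').
have hl := hle l; rewrite -(hc0 l) -(hc' l) !cpat_carry // in hl.
have o1 := ones01 (csharp p n d c) l.
have o2 := ones01 (csharp p n d c') l.
case: (leqP (carry p b0 l) (carry p b' l)) => [hge|hlt].
  have heq : carry p b' l = carry p b0 l by apply/eqP; rewrite eqn_leq hl hge.
  rewrite heq lerD2l lerN2 /ones.
  case: ifP => [/andP [h1 h2]|]; last by case: ifP.
  by rewrite h1 (part3key p1 n0 hd0 hc0 hd' hc' heq h2).
move: o1 o2; move: (ones (csharp p n d c) l) (ones (csharp p n d c') l) (ones (floorp p d) l).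
move=> x y z o1 o2; lia.
Qed.
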